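(* Let $X$ be a nonempty set and $d$ a weak almost partial metric on $X$ such that $(X,d)$ is 0-complete. Let $T:X\to X$, $G\in\{M_1,M_2\}$, and suppose $d(Tx,Ty)\le\varphi(G(x,y))$ for all $x,y\in X$, for some nearly right admissible asymptotic normal function $\varphi:[0,\infty)\to[0,\infty)$. Then there is $z\in X$ with $d(z,z)=0$ such that $\mathrm{Fix}(T;d)=\mathrm{Fix}(T)=\{z\}$, and $d(T^nx,z)\to0$ as $n\to\infty$ for each $x\in X$.
   Context: A symmetric on $X$ is a map $d:X\times X\to[0,\infty)$ with $d(x,y)=d(y,x)$. It is a weak almost partial metric if it is triangular ($d(x,z)\le d(x,y)+d(y,z)$ for all $x,y,z$) and sufficient ($d(x,y)=0$ implies $x=y$). A sequence $(x_n)$ $0d$-converges to $x$ if $d(x_n,x)\to0$; it is $0d$-Cauchy if for every $\varepsilon>0$ there is $j$ with $d(x_m,x_n)<\varepsilon$ whenever $j\le m<n$; $(X,d)$ is 0-complete if every $0d$-Cauchy sequence $0d$-converges to some point. $\mathrm{Fix}(T;d)=\{z: d(z,Tz)=0\}$, $\mathrm{Fix}(T)=\{z: Tz=z\}$. Notation: $M_1(x,y)=d(x,y)$, $H(x,y)=\max\{d(x,Tx),d(y,Ty)\}$, $M_2=\max\{M_1,H\}$. $\varphi$ is normal if $\varphi(0)=0$ and $\varphi(t)<t$ for $t>0$; asymptotic normal if normal and every sequence $(r_n)$ in $[0,\infty)$ with $r_{n+1}\le\varphi(r_n)$ for all $n$ tends to $0$; nearly right admissible if normal and there is a countable $Q\subseteq(0,\infty)$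 with $\max\{\limsup_{t\to s+}\varphi(t),\varphi(s)\}<s$ for all $s\in(0,\infty)\setminus Q$. *)

(* Defs.v *)
From Stdlib Require Import Reals.
Open Scope R_scope.

Definition symmetric_on {X : Type} (d : X -> X -> R) : Prop :=
  (forall x y, 0 <= d x y) /\ (forall x y, d x y = d y x).

Definition triangular {X : Type} (d : X -> X -> R) : Prop :=
  forall x y z, d x z <= d x y + d y z.

Definition sufficient {X : Type} (d : X -> X -> R) : Prop :=
  forall x y, d x y = 0 -> x = y.

Definition weak_almost_partial_metric {X : Type} (d : X -> X -> R) : Prop :=
  symmetric_on d /\ triangular d /\ sufficient d.

Definition d0_converges {X : Type} (d : X -> X -> R) (u : nat -> X) (x : X) : Prop :=
  Un_cv (fun n => d (u n) x) 0.

Definition d0_Cauchy {X : Type} (d : X -> X -> R) (u : nat -> X) : Prop :=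
  forall eps, eps > 0 -> exists j : nat, forall m n : nat,
    (j <= m)%nat -> (m < n)%nat -> d (u m) (u n) < eps.

Definition zero_complete {X : Type} (d : X -> X -> R) : Prop :=
  forall u : nat -> X, d0_Cauchy d u -> exists x, d0_converges d u x.

Definition Fix_d {X : Type} (d : X -> X -> R) (T : X -> X) (z : X) : Prop :=
  d z (T z) = 0.

Definition Fix {X : Type} (T : X -> X) (z : X) : Prop := T z = z.

Definition M1 {X : Type} (d : X -> X -> R) (x y : X) : R := d x y.
Definition H {X : Type} (d : X -> X -> R) (T : X -> X) (x y : X) : R :=
  Rmax (d x (T x)) (d y (T y)).
Definition M2 {X : Type} (d : X -> X -> R) (T : X -> X) (x y : X) : R :=
  Rmax (M1 d x y) (H d T x y).

(* phi : [0,oo) -> [0,oo), represented as a function R -> R mapping [0,oo) into [0,oo);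
   values outside [0,oo) are irrelevant. *)
Definition maps_nonneg (phi : R -> R) : Prop := forall t, 0 <= t -> 0 <= phi t.

Definition normal (phi : R -> R) : Prop :=
  maps_nonneg phi /\ phi 0 = 0 /\ forall t, t > 0 -> phi t < t.

Definition asymptotic_normal (phi : R -> R) : Prop :=
  normal phi /\
  forall r : nat -> R, (forall n, 0 <= r n) -> (forall n, r (S n) <= phi (r n)) ->
    Un_cv r 0.

(* limsup_{t -> s+} phi t < s, unfolded: some bound c < s holds for phi on (s, s+delta). *)
Definition limsup_right_lt (phi : R -> R) (s : R) : Prop :=
  exists c delta, c < s /\ delta > 0 /\ forall t, s < t < s + delta -> phi t <= c.

Definition countable_set (Q : R -> Prop) : Prop :=
  exists f : nat -> R, forall q, Q q -> exists n, f n = q.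

Definition nearly_right_admissible (phi : R -> R) : Prop :=
  normal phi /\
  exists Q : R -> Prop, countable_set Q /\ (forall q, Q q -> q > 0) /\
    forall s, s > 0 -> ~ Q s -> limsup_right_lt phi s /\ phi s < s.

(* Main.v *)
Require Import Defs.
From Stdlib Require Import Reals Lra Lia Classical.
Open Scope R_scope.

Definition stepI (f : nat -> R) (n : nat) (p : R * R) : R * R :=
  let (a, b) := p in
  if Rle_dec (f n) (a + (b - a) / 3) then (a + 2 * (b - a) / 3, b)
  else (a, a + (b - a) / 3).

Fixpoint seqI (f : nat -> R) (a b : R) (n : nat) : R * R :=
  match n with O => (a, b) | S n => stepI f n (seqI f a b n) end.

Lemma seqI_props f a b : a < b -> forall n,
  fst (seqI f a b n) < snd (seqI f a b n) /\
  fst (seqI f a b n) <= fst (seqI f a b (S n)) /\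
  snd (seqI f a b (S n)) <= snd (seqI f a b n) /\
  (f n < fst (seqI f a b (S n)) \/ snd (seqI f a b (S n)) < f n).
Proof.
  intros Hab n. induction n as [|n IH].
  - simpl. unfold stepI. destruct (Rle_dec (f 0%nat) (a + (b - a) / 3)); simpl; lra.
  - destruct IH as [IH1 [IH2 [IH3 IH4]]].
    assert (Hlt : fst (seqI f a b (S n)) < snd (seqI f a b (S n))).
    { simpl. unfold stepI. destruct (seqI f a b n) as [u v]. simpl in *.
      destruct (Rle_dec (f n) (u + (v - u) / 3)); simpl; lra. }
    split; [exact Hlt|].
    change (seqI f a b (S (S n))) with (stepI f (S n) (seqI f a b (S n))).
    destruct (seqI f a b (S n)) as [u v]. simpl in Hlt. unfold stepI.
    destruct (Rle_dec (f (S n)) (u + (v - u) / 3)); simpl; lra.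
Qed.

Lemma seqI_mono f a b : a < b -> forall n k,
  fst (seqI f a b n) <= fst (seqI f a b (n + k)) /\
  snd (seqI f a b (n + k)) <= snd (seqI f a b n).
Proof.
  intros Hab n k. induction k as [|k IH].
  - rewrite Nat.add_0_r. lra.
  - rewrite Nat.add_succ_r. destruct (seqI_props f a b Hab (n + k)) as [_ [H2 [H3 _]]]. lra.
Qed.

Lemma avoid_countable (f : nat -> R) (a b : R) : a < b ->
  exists x, a <= x <= b /\ forall n, f n <> x.
Proof.
  intros Hab.
  assert (Hle : forall n m, fst (seqI f a b n) <= snd (seqI f a b m)).
  { intros n m. destruct (seqI_mono f a b Hab n m) as [H1 _].
    destruct (seqI_mono f a b Hab m n) as [_ H2].
    destruct (seqI_props f a b Hab (n + m)) as [H3 _].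
    rewrite Nat.add_comm in H2. lra. }
  set (E := fun y => exists n, y = fst (seqI f a b n)).
  assert (HB : bound E).
  { exists b. intros y [n ->]. apply (Hle n 0%nat). }
  assert (HE : exists y, E y) by (exists a; exists 0%nat; reflexivity).
  destruct (completeness E HB HE) as [x [Hub Hlub]].
  assert (Hlo : forall n, fst (seqI f a b n) <= x) by (intros n; apply Hub; exists n; reflexivity).
  assert (Hhi : forall m, x <= snd (seqI f a b m)).
  { intros m. apply Hlub. intros y [n ->]. apply Hle. }
  exists x. split.
  - split; [apply (Hlo 0%nat) | apply (Hhi 0%nat)].
  - intros n Hn. destruct (seqI_props f a b Hab n) as [_ [_ [_ H4]]].
    specialize (Hlo (S n)). specialize (Hhi (S n)). lra.
Qed.

Lemma phi_le phi : normal phi -> forall t, 0 <= t -> phi t <= t.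
Proof.
  intros [Hn [H0 Hlt]] t Ht. destruct (Req_dec t 0) as [->|Hne].
  - rewrite H0; lra.
  - left; apply Hlt; lra.
Qed.

Lemma le_phi_zero phi : normal phi -> forall t, 0 <= t -> t <= phi t -> t = 0.
Proof.
  intros [Hn [H0 Hlt]] t Ht Hle. destruct (Req_dec t 0) as [->|Hne]; auto.
  specialize (Hlt t ltac:(lra)). lra.
Qed.

Lemma least_aux : forall (P : nat -> Prop) N n, (n <= N)%nat -> P n ->
  exists k, P k /\ forall i, (i < k)%nat -> ~ P i.
Proof.
  intros P N. induction N as [|N IH]; intros n Hn Pn.
  - exists n. split; auto. intros i Hi. lia.
  - destruct (classic (exists i, (i < n)%nat /\ P i)) as [[i [Hi Pi]]|Hno].
    + apply (IH i); auto. lia.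
    + exists n. split; auto. intros i Hi Pi. apply Hno. eauto.
Qed.

Lemma least (P : nat -> Prop) n : P n -> exists k, P k /\ forall i, (i < k)%nat -> ~ P i.
Proof. intros; apply (least_aux P n n); auto. Qed.

Lemma Rmax_is_l a b c : b <= a -> c <= a -> Rmax a (Rmax b c) = a.
Proof. intros; unfold Rmax; repeat destruct Rle_dec; lra. Qed.

Definition Gcases {X : Type} (d : X -> X -> R) (T : X -> X) (G : X -> X -> R) :=
  forall x y, G x y = d x y \/ G x y = Rmax (d x y) (Rmax (d x (T x)) (d y (T y))).

Lemma step_ineq {X : Type} (d : X -> X -> R) T G phi :
  symmetric_on d -> Gcases d T G -> normal phi ->
  (forall x y, d (T x) (T y) <= phi (G x y)) ->
  forall x, d (T x) (T (T x)) <= phi (d x (T x)).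
Proof.
  intros [Hnn Hsym] HG Hphi Hcon x.
  pose proof (Hcon x (T x)) as Hc.
  destruct (HG x (T x)) as [E|E]; rewrite E in Hc; auto.
  set (a := d x (T x)) in *. set (b := d (T x) (T (T x))) in *.
  assert (0 <= a) by apply Hnn. assert (0 <= b) by apply Hnn.
  destruct (Rle_dec b a).
  - rewrite Rmax_is_l in Hc; auto. lra.
  - exfalso. assert (Rmax a (Rmax a b) = b) as Em by (unfold Rmax; repeat destruct Rle_dec; lra).
    rewrite Em in Hc. destruct Hphi as [_ [_ Hlt]]. specialize (Hlt b ltac:(lra)). lra.
Qed.

Lemma cauchy_iter {X : Type} (d : X -> X -> R) T G phi x :
  weak_almost_partial_metric d -> Gcases d T G -> nearly_right_admissible phi ->
  asymptotic_normal phi ->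
  (forall x y, d (T x) (T y) <= phi (G x y)) ->
  d0_Cauchy d (fun n => Nat.iter n T x).
Proof.
  intros [[Hnn Hsym] [Htri Hsuf]] HG [Hphi [Q [[f Hf] [Qpos HQ]]]] [_ Has] Hcon.
  set (u := fun n => Nat.iter n T x).
  assert (HuS : forall n, u (S n) = T (u n)) by reflexivity.
  set (r := fun n => d (u n) (u (S n))).
  assert (Hr : Un_cv r 0).
  { apply Has. intros; apply Hnn. intros n. unfold r. rewrite !HuS.
    apply (step_ineq d T G phi (conj Hnn Hsym) HG Hphi Hcon). }
  intros eps0 Heps0. apply NNPP; intro Hno.
  assert (Hbad : forall j, exists m n, (j <= m)%nat /\ (m < n)%nat /\ eps0 <= d (u m) (u n)).
  { intro j. apply NNPP; intro H'. apply Hno; exists j; intros m n Hm Hmn.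
    apply Rnot_le_lt; intro; apply H'; exists m, n; auto. }
  destruct (avoid_countable f (eps0/2) eps0 ltac:(lra)) as [eps [Heps Hnf]].
  assert (HnQ : ~ Q eps) by (intro Hq; destruct (Hf eps Hq) as [k Hk]; exact (Hnf k Hk)).
  destruct (HQ eps ltac:(lra) HnQ) as [[c [delta [Hc [Hdelta Hlim]]]] Hpe].
  set (eta := Rmin (Rmin delta eps) (Rmin ((eps - c)/2) ((eps - phi eps)/3))).
  assert (Heta : 0 < eta).
  { unfold eta. repeat apply Rmin_pos; lra. }
  assert (Heta1 : eta <= delta) by (unfold eta; repeat (apply Rmin_l || eapply Rle_trans; try apply Rmin_l)).
  assert (Heta2 : eta <= eps) by (unfold eta; eapply Rle_trans; [apply Rmin_l| apply Rmin_r]).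
  assert (Heta3 : eta <= (eps - c)/2) by (unfold eta; eapply Rle_trans; [apply Rmin_r| apply Rmin_l]).
  assert (Heta4 : eta <= (eps - phi eps)/3) by (unfold eta; eapply Rle_trans; [apply Rmin_r| apply Rmin_r]).
  destruct (Hr eta Heta) as [j Hj].
  assert (Hrj : forall n, (n >= j)%nat -> r n < eta).
  { intros n Hn. specialize (Hj n Hn). unfold R_dist in Hj. rewrite Rminus_0_r in Hj.
    apply Rabs_def2 in Hj. lra. }
  destruct (Hbad j) as [m [n [Hjm [Hmn Hdmn]]]].
  destruct (least (fun k => (m < k)%nat /\ eps <= d (u m) (u k)) n ltac:(split; [auto|lra]))
    as [n' [[Hmn' Hd'] Hmin]].
  destruct n' as [|p]; [lia|].
  assert (Hrm := Hrj m ltac:(lia)).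
  assert (Hrp := Hrj p ltac:(lia)).
  assert (Hrn := Hrj (S p) ltac:(lia)).
  destruct (Nat.eq_dec p m) as [->|Hpm].
  { unfold r in Hrm. lra. }
  assert (Hdp : d (u m) (u p) < eps).
  { apply Rnot_le_lt; intro Hle. apply (Hmin p); [lia|split; [lia|auto]]. }
  set (t := d (u m) (u (S p))) in *.
  assert (Ht1 : t <= d (u m) (u p) + r p) by apply Htri.
  assert (HGt : G (u m) (u (S p)) = t).
  { destruct (HG (u m) (u (S p))) as [E|E]; rewrite E; auto.
    apply Rmax_is_l; rewrite <- !HuS; fold (r m) (r (S p)); lra. }
  assert (Hc1 := Hcon (u m) (u (S p))). rewrite HGt, <- !HuS in Hc1.
  assert (Ht2 : t <= r m + (d (u (S m)) (u (S (S p))) + r (S p))).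
  { eapply Rle_trans; [apply (Htri _ (u (S m)))|].
    apply Rplus_le_compat_l. eapply Rle_trans; [apply (Htri _ (u (S (S p))))|].
    unfold r. rewrite (Hsym (u (S (S p)))). lra. }
  destruct (Req_dec t eps) as [Et|Et].
  - rewrite Et in Hc1. lra.
  - assert (phi t <= c) by (apply Hlim; lra). lra.
Qed.

Lemma conv_fix {X : Type} (d : X -> X -> R) T G phi x :
  weak_almost_partial_metric d -> zero_complete d -> Gcases d T G -> nearly_right_admissible phi ->
  asymptotic_normal phi ->
  (forall x y, d (T x) (T y) <= phi (G x y)) ->
  exists z, Un_cv (fun n => d (Nat.iter n T x) z) 0 /\ T z = z.
Proof.
  intros Hd Hc HG Hnra Han Hcon.
  destruct (Hc _ (cauchy_iter d T G phi x Hd HG Hnra Han Hcon)) as [z Hz].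
  exists z. split; [exact Hz|].
  destruct Hd as [[Hnn Hsym] [Htri Hsuf]]. destruct Han as [Hphi _].
  symmetry. apply Hsuf.
  set (u := fun n => Nat.iter n T x) in *.
  set (a := d z (T z)).
  destruct (Req_dec a 0) as [|Ha]; auto. exfalso.
  assert (Ha0 : 0 < a) by (pose proof (Hnn z (T z)); unfold a in *; lra).
  assert (Hpa : phi a < a) by (apply Hphi; lra).
  assert (Hpa0 : 0 <= phi a) by (apply Hphi; lra).
  set (eta := (a - phi a) / 4).
  destruct (Hz eta ltac:(unfold eta; lra)) as [N HN].
  assert (HN' : forall n, (n >= N)%nat -> d (u n) z < eta).
  { intros n Hn. specialize (HN n Hn). unfold R_dist in HN. rewrite Rminus_0_r in HN.
    apply Rabs_def2 in HN. lra. }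
  assert (H1 := HN' N ltac:(lia)). assert (H2 := HN' (S N) ltac:(lia)).
  assert (Hr : d (u N) (T (u N)) <= 2 * eta).
  { change (T (u N)) with (u (S N)). eapply Rle_trans; [apply (Htri _ z)|].
    rewrite (Hsym z). lra. }
  assert (Hc1 := Hcon z (u N)).
  assert (Hb : d (T z) (T (u N)) <= Rmax (d z (u N)) (phi a)).
  { destruct (HG z (u N)) as [E|E]; rewrite E in Hc1.
    - eapply Rle_trans; [exact Hc1|]. eapply Rle_trans; [apply phi_le; auto|]. apply Rmax_l.
    - rewrite (Rmax_comm (d z (T z))) in Hc1.
      assert (Em : Rmax (d z (u N)) (Rmax (d (u N) (T (u N))) (d z (T z))) = a).
      { rewrite (Hsym z). fold a. unfold eta in *. unfold Rmax; repeat destruct Rle_dec; lra. }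
      rewrite Em in Hc1. eapply Rle_trans; [exact Hc1|]. apply Rmax_r. }
  assert (Htr : a <= d z (u (S N)) + d (u (S N)) (T z)) by apply Htri.
  change (u (S N)) with (T (u N)) in Htr.
  rewrite (Hsym (T (u N))) in Htr. rewrite (Hsym z) in Hb.
  change (T (u N)) with (u (S N)) in Htr. rewrite (Hsym z) in Htr.
  change (T (u N)) with (u (S N)) in Hb. unfold eta in *. unfold Rmax in Hb. destruct Rle_dec; lra.
Qed.

Theorem theorem5 (X : Type) (x0 : X) (d : X -> X -> R) (T : X -> X)
  (G : X -> X -> R) (phi : R -> R) :
  weak_almost_partial_metric d ->
  zero_complete d ->
  (G = M1 d \/ G = M2 d T) ->
  nearly_right_admissible phi ->
  asymptotic_normal phi ->
  (forall x y, d (T x) (T y) <= phi (G x y)) ->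
  exists z : X, d z z = 0 /\
    (forall w, Fix_d d T w <-> w = z) /\
    (forall w, Fix T w <-> w = z) /\
    (forall x, Un_cv (fun n => d (Nat.iter n T x) z) 0).
Proof.
  intros Hd Hc HG0 Hnra Han Hcon.
  assert (HG : Gcases d T G).
  { intros x y. destruct HG0 as [->| ->]; [left|right]; reflexivity. }
  pose proof Hd as [[Hnn Hsym] [Htri Hsuf]]. pose proof Han as [Hphi _].
  assert (Hself : forall w, T w = w -> d w w = 0).
  { intros w Hw. apply (le_phi_zero phi Hphi); [apply Hnn|].
    pose proof (Hcon w w) as H1. rewrite Hw in H1.
    destruct (HG w w) as [E|E]; rewrite E, ?Hw in H1; auto.
    replace (Rmax (d w w) (Rmax (d w w) (d w w))) with (d w w) in H1 by (unfold Rmax; repeat destruct Rle_dec; lra); auto. }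
  assert (Huniq : forall w v, T w = w -> T v = v -> w = v).
  { intros w v Hw Hv. apply Hsuf. apply (le_phi_zero phi Hphi); [apply Hnn|].
    pose proof (Hcon w v) as H1. rewrite Hw, Hv in H1.
    destruct (HG w v) as [E|E]; rewrite E, ?Hw, ?Hv in H1; auto.
    rewrite (Hself w Hw), (Hself v Hv) in H1.
    rewrite Rmax_is_l in H1; auto; try (unfold Rmax; destruct Rle_dec); try lra; apply Hnn. }
  destruct (conv_fix d T G phi x0 Hd Hc HG Hnra Han Hcon) as [z [_ Hz]].
  exists z. split; [apply Hself; auto|]. split; [|split].
  - intros w. unfold Fix_d. split.
    + intros H0. apply Huniq; auto. symmetry; apply Hsuf; auto.
    + intros ->. rewrite Hz. apply Hself; auto.
  - intros w. unfold Fix. split; [intros; apply Huniq; auto| intros ->; auto].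
  - intros x. destruct (conv_fix d T G phi x Hd Hc HG Hnra Han Hcon) as [z' [Hc' Hz']].
    rewrite <- (Huniq z' z Hz' Hz). exact Hc'.
Qed.
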